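(* Let $G$ be a graph and $l\ge1$ an integer. If $G$ has three distinct closed non-backtracking walks, each of length $l$, each starting and ending at the same vertex $v$, then $\mathrm{Abl}(G)\le 4l$.
   Context: A graph is $G=(V_G,E_G,t_G,h_G)$ with vertex set, edge set and tail/head maps (loops and multiple edges allowed). Directed edges are pairs $(e,\pm)$, with $(e,+)$ going from $t(e)$ to $h(e)$ and $(e,-)$ its inverse. A walk of length $m\ge1$ is a sequence $(u_1,\dots,u_m)$ of directed edges with the head of $u_i$ equal to the tail of $u_{i+1}$; it is closed if its start and end vertices coincide and non-backtracking if $u_{i+1}$ is never the inverse of $u_i$. The abelian girth $\mathrm{Abl}(G)$ is the minimum $m\ge1$ such that there is a closed non-backtracking walk $(u_1,\dots,u_m)$ in which, for every edge $e$, $(e,+)$ appears the same number of times as $(e,-)$ ($\infty$ if none exists). *)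

(* Defs.v *)
From mathcomp Require Import all_boot.
Set Implicit Arguments. Unset Strict Implicit. Unset Printing Implicit Defensive.

(* A graph is given by a vertex type V, an edge type E (both with decidable
   equality; loops and multiple edges allowed) and tail/head maps t h : E -> V.
   A directed edge is a pair (e, b) : E * bool, with (e, true) = (e,+) going
   from t e to h e, and (e, false) = (e,-) its inverse. *)

Section Graphs.
Variables (V E : eqType) (t h : E -> V).

Definition dtail (d : E * bool) : V := if d.2 then t d.1 else h d.1.
Definition dhead (d : E * bool) : V := if d.2 then h d.1 else t d.1.
Definition dinv (d : E * bool) : E * bool := (d.1, ~~ d.2).

Definition is_walk (w : seq (E * bool)) : bool :=
  if w is d :: w' then path (fun a b => dhead a == dtail b) d w' else false.

Definition walk_start (w : seq (E * bool)) (v : V) : bool :=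
  if w is d :: _ then dtail d == v else false.

Definition walk_end (w : seq (E * bool)) (v : V) : bool :=
  if w is d :: w' then dhead (last d w') == v else false.

Definition is_closed_walk (w : seq (E * bool)) : bool :=
  if w is d :: w' then is_walk w && (dhead (last d w') == dtail d) else false.

Definition non_backtracking (w : seq (E * bool)) : bool :=
  sorted (fun a b => b != dinv a) w.

Definition balanced (w : seq (E * bool)) : Prop :=
  forall e : E, count_mem (e, true) w = count_mem (e, false) w.

Definition abelian_walk (w : seq (E * bool)) : Prop :=
  [/\ is_closed_walk w, non_backtracking w & balanced w].

(* Abl(G) <= k  (Abl(G) = min length of an abelian closed NB walk, or infinity) *)
Definition Abl_le (k : nat) : Prop :=
  exists w : seq (E * bool), abelian_walk w /\ 1 <= size w <= k.

Definition cnb_walk_at (v : V) (l : nat) (w : seq (E * bool)) : Prop :=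
  [/\ is_closed_walk w, non_backtracking w, size w = l,
      walk_start w v & walk_end w v].

End Graphs.

(* Main.v *)
Require Import Defs.
From mathcomp Require Import all_boot zify.
Set Implicit Arguments. Unset Strict Implicit. Unset Printing Implicit Defensive.

Section Red.
Variables (V E : eqType) (t h : E -> V).
Local Notation D := (E * bool)%type.
Local Notation dt := (dtail t h).
Local Notation dh := (dhead t h).

Lemma dinvK : involutive (@dinv E).
Proof. by case=> e b; rewrite /dinv /= negbK. Qed.

Lemma dinv_eq (x d : D) : (x == dinv d) = (d == dinv x).
Proof. by apply/eqP/eqP => ->; rewrite dinvK. Qed.

Lemma dtail_inv d : dt (dinv d) = dh d.
Proof. by case: d => e []. Qed.
Lemma dhead_inv d : dh (dinv d) = dt d.
Proof. by case: d => e []. Qed.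

Definition inv (w : seq D) := rev (map (@dinv E) w).
Lemma invK : involutive inv.
Proof. by move=> w; rewrite /inv map_rev revK -map_comp (eq_map dinvK) map_id. Qed.
Lemma inv_cat u v : inv (u ++ v) = inv v ++ inv u.
Proof. by rewrite /inv map_cat rev_cat. Qed.
Lemma inv_cons d w : inv (d :: w) = rcons (inv w) (dinv d).
Proof. by rewrite /inv /= rev_cons. Qed.
Lemma size_inv w : size (inv w) = size w.
Proof. by rewrite /inv size_rev size_map. Qed.

Definition push (s : seq D) (d : D) :=
  if s is x :: s' then (if x == dinv d then s' else d :: s) else [:: d].
Local Notation red := (foldl push).
Definition srel (x y : D) := x != dinv y.
Definition nb (x y : D) := y != dinv x.

Lemma push_red s d : sorted srel s -> sorted srel (push s d).
Proof.
case: s => [|x s] //=. case: ifP => Hx Hs; first exact: path_sorted Hs.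
by rewrite /= Hs andbT /srel -dinv_eq Hx.
Qed.

Lemma red_red s w : sorted srel s -> sorted srel (red s w).
Proof. by elim: w s => //= d w IH s Hs; apply: IH; apply: push_red. Qed.

Lemma push_inv s d : sorted srel s -> push (push s d) (dinv d) = s.
Proof.
case: s => [|x s] /=; first by rewrite dinvK eqxx.
case: ifP => [/eqP -> | Hx].
  case: s => [|y s] //= /andP [H _].
  have : y != d by apply: contra H => /eqP ->.
  by rewrite dinvK => /negbTE ->.
by rewrite /= dinvK eqxx.
Qed.

Lemma red_cancel s u : sorted srel s -> red s (u ++ inv u) = s.
Proof.
elim: u s => [|d u IH] s Hs; first by [].
rewrite inv_cons -cats1 catA /= foldl_cat IH /=; first exact: push_inv.
exact: push_red.
Qed.

Lemma sorted_suffix (r : rel D) p x q : sorted r (p ++ x :: q) -> path r x q.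
Proof.
case: p => [|y p] //=. by rewrite cat_path => /andP [_ /= /andP [_ ->]].
Qed.

Lemma sorted_join (r : rel D) p x d b :
  sorted r (rcons p x) -> r x d -> path r d b -> sorted r (rcons p x ++ d :: b).
Proof.
case: p => [|y p] /=; first by move=> _ -> ->.
by rewrite cat_path last_rcons /= => -> -> ->.
Qed.

Lemma red_nb s a : sorted nb (rev s ++ a) -> red s a = rev a ++ s.
Proof.
elim: a s => [|d a IH] s /= H; first by [].
have -> : push s d = d :: s.
  case: s H => [|x s] //= H.
  move: H; rewrite rev_cons cat_rcons => /sorted_suffix /= /andP [Hn _].
  by rewrite dinv_eq (negbTE Hn).
by rewrite IH ?rev_cons ?cat_rcons.
Qed.

Lemma srel_nb s : sorted srel s = sorted nb (rev s).
Proof. by rewrite rev_sorted. Qed.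

Lemma red_dec s b : sorted srel s -> sorted nb b -> exists k,
  [/\ k <= size s, k <= size b, take k b = map (@dinv E) (take k s)
   & red s b = rev (drop k b) ++ drop k s].
Proof.
elim: b s => [|d b IH] s Hs Hb.
  by exists 0; split => //; case: s Hs.
case: s Hs => [|x s] Hs.
  by exists 0; split => //=; rewrite red_nb // cats0 rev_cons cats1.
case: (boolP (x == dinv d)) => Hx.
  have [k [H1 H2 H3 H4]] := IH s (path_sorted Hs) (path_sorted Hb).
  exists k.+1; split => //=; last by rewrite Hx.
  by rewrite H3 (eqP Hx) dinvK.
exists 0; split => //=; rewrite (negbTE Hx) red_nb ?drop0 ?rev_cons ?cat_rcons //.
rewrite -cat_rcons; apply: sorted_join => //.
  by rewrite -rev_cons -srel_nb.
by rewrite /nb -dinv_eq.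
Qed.

Fixpoint wk (x : V) (w : seq D) (y : V) : bool :=
  if w is d :: w' then (dt d == x) && wk (dh d) w' y else x == y.

Lemma wk_rcons x u d z : wk x (rcons u d) z = wk x u (dt d) && (dh d == z).
Proof.
elim: u x => [|e u IH] x /=; first by rewrite eq_sym.
by rewrite IH andbA.
Qed.

Lemma wk_cat x u y v z : wk x u y -> wk y v z -> wk x (u ++ v) z.
Proof.
elim: u x => [|d u IH] x /=; first by move/eqP ->.
by case/andP => -> /IH H /H.
Qed.

Lemma wk_inv x w y : wk x w y -> wk y (inv w) x.
Proof.
elim: w x => [|d w IH] x /=; first by move/eqP ->; rewrite /inv /= eqxx.
case/andP => /eqP Hd /IH H.
by rewrite inv_cons wk_rcons dtail_inv dhead_inv Hd H eqxx.
Qed.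

Lemma red_wk x s y w z : wk x (rev s) y -> wk y w z -> wk x (rev (red s w)) z.
Proof.
elim: w s y => [|d w IH] s y /=; first by move=> H /eqP <-.
move=> H /andP [/eqP Hd Hw]; apply: (IH _ (dh d)) => //.
case: s H => [|e s] H /=.
  by move: H => /= /eqP ->; rewrite Hd !eqxx.
case: ifP => He.
  move: H; rewrite rev_cons wk_rcons (eqP He) dtail_inv => /andP [] //.
by rewrite rev_cons wk_rcons Hd H eqxx.
Qed.

Lemma wk_path x d w y : wk x (d :: w) y ->
  [&& path (fun a b => dhead t h a == dtail t h b) d w, dh (last d w) == y & dt d == x].
Proof.
elim: w d x => [|e w IH] d x /=; first by rewrite andbC.
case/andP => -> /andP [He Hw].
have /and3P [-> -> _] := IH e (dh d) (introT andP (conj He Hw) : wk (dh d) (e :: w) y).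
by rewrite eq_sym He.
Qed.

Lemma path_wk d w : path (fun a b => dhead t h a == dtail t h b) d w ->
  wk (dt d) (d :: w) (dh (last d w)).
Proof.
elim: w d => [|e w IH] d /=; first by rewrite !eqxx.
case/andP => /eqP He /IH /= /andP [_ H].
by rewrite eqxx He eqxx H.
Qed.

Lemma cnb_wk v l w : cnb_walk_at t h v l w -> wk v w v.
Proof.
case=> Hc _ _; case: w Hc => [|d w] //= /andP [Hp _] /eqP Hs /eqP He.
by move: (path_wk Hp) => /=; rewrite Hs He.
Qed.

Lemma size_red s w : size (red s w) <= size s + size w.
Proof.
elim: w s => [|d w IH] s /=; first by rewrite addn0.
have Hp : size (push s d) <= (size s).+1.
  by case: s => [|x s] //=; case: ifP => //= _; apply: leqW.
apply: leq_trans (IH _) _; rewrite addnS -addSn leq_add2r //.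
Qed.

Lemma dinv_pair d (e : E) b : (dinv d == (e, b)) = (d == (e, ~~ b)).
Proof. by apply/eqP/eqP => [H|->]; [rewrite -[d]dinvK H | rewrite /dinv /= negbK]. Qed.

Ltac genb := repeat match goal with
  | |- context [nat_of_bool ?b] =>
    let n := fresh "n" in let Hn := fresh "Hn" in
    remember (nat_of_bool b) as n eqn:Hn in *; clear Hn
  | |- context [count ?p ?s] =>
    let n := fresh "c" in let Hn := fresh "Hn" in
    remember (count p s) as n eqn:Hn in *; clear Hn end.

Lemma push_count (e : E) s d :
  count_mem (e, true) (push s d) + count_mem (e, false) s + (d == (e, false)) =
   count_mem (e, false) (push s d) + count_mem (e, true) s + (d == (e, true)).
Proof.
  case: s => [|x s] /=; first by genb; lia.
  case: ifP => [/eqP -> | _] /=; last by genb; lia.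
  rewrite !dinv_pair /=; genb; lia.
Qed.

Lemma red_count (e : E) s w :
  count_mem (e, true) (red s w) + count_mem (e, false) s + count_mem (e, false) w =
  count_mem (e, false) (red s w) + count_mem (e, true) s + count_mem (e, true) w.
Proof.
elim: w s => [|d w IH] s; first by rewrite /= !addn0 addnC.
rewrite -[red s (d :: w)]/(red (push s d) w).
rewrite -[count_mem (e, false) (d :: w)]/((d == (e, false)) + count_mem (e, false) w).
rewrite -[count_mem (e, true) (d :: w)]/((d == (e, true)) + count_mem (e, true) w).
have := IH (push s d); have := push_count e s d; lia.
Qed.

Lemma count_inv (e : E) b w : count_mem (e, b) (inv w) = count_mem (e, ~~ b) w.
Proof.
rewrite /inv count_rev count_map; apply: eq_count => x /=.
by rewrite dinv_pair.
Qed.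

Lemma eq_td (T : Type) (x y : seq T) i j :
  take i x = take i y -> drop j x = drop j y -> j <= i -> x = y.
Proof.
move=> Ht Hd Hji.
rewrite -(cat_take_drop i x) -(cat_take_drop i y) Ht; congr (_ ++ _).
by rewrite -(subnK Hji) -!drop_drop Hd.
Qed.

Lemma main v l a b : cnb_walk_at t h v l a -> cnb_walk_at t h v l b ->
  a != b -> b != inv a -> Abl_le t h (4 * l).
Proof.
move=> Ha Hb Hab Hba.
have [_ nba sa _ _] := Ha; have [_ nbb sb _ _] := Hb.
set w := a ++ b ++ inv a ++ inv b.
have Hsr0 : sorted srel [::] by [].
have Hne : red [::] w != [::].
  apply/eqP => H0.
  set X := red [::] (a ++ b).
  have HX : red X (inv a ++ inv b) = [::] by rewrite /X -foldl_cat -catA.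
  have HXs : sorted srel X by apply: red_red.
  have HXba : red [::] (b ++ a) = X.
    rewrite -HX -foldl_cat.
    have := red_cancel (inv (b ++ a)) HXs; rewrite invK inv_cat //.
  have Hra : forall p q : seq D, sorted nb p -> red [::] (p ++ q) = red (rev p) q.
    move=> p q Hp; rewrite foldl_cat (@red_nb [::] p Hp) cats0 //.
  have Hsa : sorted srel (rev a) by rewrite srel_nb revK.
  have Hsb : sorted srel (rev b) by rewrite srel_nb revK.
  have [k [k1 k2 k3 k4]] := red_dec Hsa nbb.
  have [m [m1 m2 m3 m4]] := red_dec Hsb nba.
  move: HXba; rewrite /X !Hra // k4 m4 => Heq.
  have Hs := congr1 size Heq; move: Hs k1 k2 m1 m2.
  rewrite !size_cat !size_rev !size_drop !size_rev sa sb => Hs k1 k2 m1 m2.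
  have Ekm : m = k by lia.
  subst m; move/eqP: Heq; rewrite eqseq_cat; last by rewrite !size_rev !size_drop sa sb.
  case/andP => /eqP /(can_inj (@revK _)) E1 /eqP; rewrite !drop_rev sa sb => /(can_inj (@revK _)) E2.
  case: (leqP k (l - k)) => Hk.
    by move/eqP: Hab; apply; apply: (eq_td (esym E2) E1 Hk).
  move/eqP: Hba; apply; apply: (@eq_td _ _ _ k (l - k)); last by lia.
    by rewrite k3 /inv -map_rev map_take.
  rewrite /inv -map_rev -map_drop drop_rev sa (subKn k1) m3.
  by rewrite take_rev sb -map_rev revK (mapK dinvK).
exists (rev (red [::] w)); split; last first.
  rewrite size_rev; apply/andP; split.
    by case: (red [::] w) Hne.
  apply: leq_trans (size_red _ _) _.
  by rewrite /w /= !size_cat !size_inv sa sb; lia.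
split.
- have Hw : wk v (rev (red [::] w)) v.
    apply: (@red_wk v [::] v) => //=.
    have Hwa := cnb_wk Ha; have Hwb := cnb_wk Hb.
    apply: (wk_cat Hwa); apply: (wk_cat Hwb); apply: (wk_cat (wk_inv Hwa)).
    exact: wk_inv Hwb.
  case E0: (rev (red [::] w)) Hw => [|d w'] Hw; first by move: Hne; rewrite -(revK (red _ _)) E0.
  have /and3P [H1 H2 H3] := wk_path Hw.
  by rewrite /= H1 (eqP H2) (eqP H3) eqxx.
- have := red_red w Hsr0; rewrite srel_nb //.
- move=> e; rewrite !count_rev.
  have := red_count e [::] w; rewrite /w !count_cat !count_inv /=; lia.
Qed.
End Red.

Theorem lemma3p4 (V E : eqType) (t h : E -> V) (l : nat) (v : V)
  (w1 w2 w3 : seq (E * bool)) :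
  1 <= l ->
  cnb_walk_at t h v l w1 -> cnb_walk_at t h v l w2 -> cnb_walk_at t h v l w3 ->
  w1 != w2 -> w1 != w3 -> w2 != w3 ->
  Abl_le t h (4 * l).
Proof.
move=> _ H1 H2 H3 N12 N13 N23.
case: (eqVneq w2 (inv w1)) => H.
  by apply: (main H1 H3 N13); rewrite -H eq_sym.
exact: (main H1 H2 N12 H).
Qed.
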